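(* Let $1/3<\kappa<\gamma<1/2$, assume hypothesis (H), let $I=[a,b]\subset[0,T]$, $\varepsilon=b-a$, $a_0\in\mathbb R^k$, $\tilde h\in\mathcal L_1(\mathbb R^k)$, and let $\tilde y\in\tilde{\mathcal Q}^\kappa_{\tilde h}(I;\mathbb R^k)$ with decomposition $\tilde\delta\tilde y=(\tilde x^1\zeta^{\tilde y})^*+\tilde r^{\tilde y}$. Set $y=a_0+\int_0^\infty\hat\phi(\xi)\tilde y(\xi)d\xi$. Then $y\in\mathcal A^\kappa_{f,h}(I;\mathbb R^k)$ with $$f_{ts}=\int_0^\infty\hat\phi(\xi)\,(e^{-\xi(t-s)}-1)e^{-\xi(s-a)}\tilde h(\xi)\,d\xi,\qquad h=a_0+\int_0^\infty\hat\phi(\xi)\tilde h(\xi)d\xi,$$ and $\mathcal M[y;\mathcal A^\kappa_{f,h}(I)]\le c_x\{\mathcal N[\tilde y;\tilde{\mathcal Q}^\kappa(I)]+\varepsilon^{1-\kappa}\mathcal N[\tilde h;\mathcal L_1]\}$.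
   Context: Measurable $\hat\phi:(0,\infty)\to\mathbb R$ and $T>0$ fixed. $\mathcal L_1(V)$: measurable $g:[0,\infty)\to V$ with $\mathcal N[g;\mathcal L_1]=\int_0^\infty|\hat\phi(\xi)|(1+\xi)\|g(\xi)\|d\xi<\infty$. $\tilde{\mathcal C}_k(I;V)$: continuous maps from $\{t_1\ge\dots\ge t_k\}\subset I^k$ to $\mathcal L_1(V)$. $(\tilde\delta f)_{ts}(\xi)=f_t(\xi)-e^{-\xi(t-s)}f_s(\xi)$, $(\tilde\delta B)_{tus}(\xi)=B_{ts}-B_{tu}-e^{-\xi(t-u)}B_{us}$. $\mathcal N[B;\tilde{\mathcal C}^\mu_2]=\sup_{s<t}\mathcal N[B_{ts};\mathcal L_1]/|t-s|^\mu$, $\mathcal N[f;\tilde{\mathcal C}^\mu_1]=\mathcal N[\tilde\delta f;\tilde{\mathcal C}^\mu_2]$; $\mathcal N[h;\tilde{\mathcal C}^\mu_3]=\inf\sum_i\sup_{s<u<t}\mathcal N[h^i_{tus};\mathcal L_1]|t-u|^{-\rho_i}|u-s|^{-(\mu-\rho_i)}$ over $h=\sum_ih^i$, $\rho_i\in(0,\mu)$. Paths: $\mathcal N[z;\mathcal C_1^0]=\sup\|z_s\|$, $\mathcal N[z;\mathcal C_1^\mu]=\sup_{s\ne t}\|z_t-z_s\|/|t-s|^\mu$, $\mathcal N[r;\mathcal C_2^\mu]=\sup_{s\ne t}\|r_{ts}\|/|t-s|^\mu$. Hypothesis (H): $\tilde x^1\in\tilde{\mathcal C}_2^\gamma([0,T];\mathbb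 R^{1,n})$, $\tilde x^2\in\tilde{\mathcal C}_2^{2\gamma}([0,T];\mathbb R^{n,n})$, $\tilde x^3\in\tilde{\mathcal C}_3^{3\gamma}([0,T];\mathbb R^{n,n})$, $\tilde\delta\tilde x^1=0$, $(\tilde\delta\tilde x^2)_{tus}=\tilde x^1_{tu}\otimes x^1_{us}+\tilde x^3_{tus}$ with $x^1_{ts}=\int_0^\infty\tilde x^1_{ts}(\xi)\hat\phi(\xi)d\xi$ and $(u\otimes v)_{ij}=u_iv_j$. $\tilde{\mathcal Q}^\kappa_{\tilde h}(I;\mathbb R^k)$: $\tilde y\in\tilde{\mathcal C}_1(I;\mathbb R^k)$ with $\tilde y_a=\tilde h$ and $(\tilde\delta\tilde y)_{ts}=(\tilde x^1_{ts}\zeta_s)^*+\tilde r_{ts}$, $\zeta\in\mathcal C_1^\kappa(I;\mathbb R^{n,k})$, $\tilde r\in\tilde{\mathcal C}^{2\kappa}_2$; $\mathcal N[\tilde y;\tilde{\mathcal Q}^\kappa]=\mathcal N[\tilde y;\tilde{\mathcal C}^\kappa_1]+\mathcal N[\zeta;\mathcal C_1^0]+\mathcal N[\zeta;\mathcal C_1^\kappa]+\mathcal N[\tilde r;\tilde{\mathcal C}^{2\kappa}_2]$. $\mathcal A^\kappa_{f,h}(I;\mathbb R^k)$ for $f$ with $\mathcal N[f;\mathcal C^1_2]<\infty$ and $h\in\mathbb R^k$: $\gamma$-Hölder paths $y$ with $y_a=h$ and $(\delta y)_{ts}-f_{ts}=(x^1_{ts}\zeta^y_s)^*+r^y_{ts}$,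 $\zeta^y\in\mathcal C_1^\kappa(I;\mathbb R^{n,k})$, $r^y\in\mathcal C_2^{2\kappa}(I;\mathbb R^k)$; $\mathcal M[y;\mathcal A^\kappa_{f,h}]=\mathcal N[\zeta^y;\mathcal C_1^0]+\mathcal N[\zeta^y;\mathcal C_1^\kappa]+\mathcal N[r^y;\mathcal C_2^{2\kappa}]+\mathcal N[y;\mathcal C_1^\kappa]$. *)

(* Defs.v *)
From HB Require Import structures.
From mathcomp Require Import all_boot all_order all_algebra.
From mathcomp Require Import all_classical all_reals all_analysis.
Set Implicit Arguments. Unset Strict Implicit. Unset Printing Implicit Defensive.
Import Order.TTheory GRing.Theory Num.Theory.
Import numFieldNormedType.Exports.
Local Open Scope classical_set_scope.
Local Open Scope ring_scope.

Section Defs.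
Variable R : realType.
Local Notation M m n := 'M[R]_(m, n).

Definition halfline : set R := [set xi | 0 <= xi].

(* ||.|| on R^{m,n}: the (max) norm of matrices from MathComp-Analysis *)

Definition L1norm (phi : R -> R) m n (g : R -> M m n) : \bar R :=
  (\int[@lebesgue_measure R]_(xi in halfline)
      (`|phi xi| * (1 + xi) * `|g xi|)%:E)%E.

Definition inL1 (phi : R -> R) m n (g : R -> M m n) : Prop :=
  (forall i j, measurable_fun halfline (fun xi => g xi i j)) /\
  (L1norm phi g < +oo)%E.

Definition phint (phi : R -> R) m n (g : R -> M m n) : M m n :=
  \matrix_(i, j) Rintegral (@lebesgue_measure R) halfline
                           (fun xi => phi xi * g xi i j).

Definition tdelta1 m n (f : R -> R -> M m n) (t s : R) : R -> M m n :=
  fun xi => f t xi - expR (- (xi * (t - s))) *: f s xi.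
Definition tdelta2 m n (B : R -> R -> R -> M m n) (t u s : R) : R -> M m n :=
  fun xi => B t s xi - B t u xi - expR (- (xi * (t - u))) *: B u s xi.

Definition tC1 (phi : R -> R) (a b : R) m n (f : R -> R -> M m n) : Prop :=
  (forall t, a <= t <= b -> inL1 phi (f t)) /\
  (forall t, a <= t <= b -> forall e : R, 0 < e -> exists2 d : R, 0 < d &
     forall t', a <= t' <= b -> `|t' - t| < d ->
       (L1norm phi (fun xi => (f t' xi - f t xi)%R) < e%:E)%E).

Definition tC2 (phi : R -> R) (a b : R) m n (B : R -> R -> R -> M m n) : Prop :=
  (forall t s, a <= s <= t -> t <= b -> inL1 phi (B t s)) /\
  (forall t s, a <= s <= t -> t <= b -> forall e : R, 0 < e ->
     exists2 d : R, 0 < d &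
     forall t' s', a <= s' <= t' -> t' <= b -> `|t' - t| < d -> `|s' - s| < d ->
       (L1norm phi (fun xi => (B t' s' xi - B t s xi)%R) < e%:E)%E).

Definition tC3 (phi : R -> R) (a b : R) m n (h : R -> R -> R -> R -> M m n)
  : Prop :=
  (forall t u s, a <= s <= u -> u <= t <= b -> inL1 phi (h t u s)) /\
  (forall t u s, a <= s <= u -> u <= t <= b -> forall e : R, 0 < e ->
     exists2 d : R, 0 < d &
     forall t' u' s', a <= s' <= u' -> u' <= t' <= b ->
       `|t' - t| < d -> `|u' - u| < d -> `|s' - s| < d ->
       (L1norm phi (fun xi => (h t' u' s' xi - h t u s xi)%R) < e%:E)%E).

Definition tN2 (phi : R -> R) (a b mu : R) m n (B : R -> R -> R -> M m n)
  : \bar R :=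
  ereal_sup [set z | exists t s, a <= s /\ s < t /\ t <= b /\
                     z = (L1norm phi (B t s) * ((t - s) `^ mu)^-1%:E)%E].

Definition tN1 (phi : R -> R) (a b mu : R) m n (f : R -> R -> M m n)
  : \bar R := tN2 phi a b mu (tdelta1 f).

Definition intC2mu (phi : R -> R) (a b mu : R) m n (B : R -> R -> R -> M m n)
  : Prop := tC2 phi a b B /\ (tN2 phi a b mu B < +oo)%E.

Definition supC3 (phi : R -> R) (a b mu : R) m n
  (g : R -> R -> R -> R -> M m n) (rho : R) : \bar R :=
  ereal_sup [set z | exists t u s, a <= s /\ s < u /\ u < t /\ t <= b /\
          z = (L1norm phi (g t u s) * ((t - u) `^ rho)^-1%:E
                 * ((u - s) `^ (mu - rho))^-1%:E)%E].

Definition intC3mu (phi : R -> R) (a b mu : R) m n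
  (h : R -> R -> R -> R -> M m n) : Prop :=
  tC3 phi a b h /\
  exists (p : nat) (hi : 'I_p -> R -> R -> R -> R -> M m n) (rho : 'I_p -> R),
    (forall i, 0 < rho i < mu) /\
    (forall t u s xi, a <= s <= u -> u <= t <= b -> 0 <= xi ->
        h t u s xi = \sum_(i < p) hi i t u s xi) /\
    (forall i t u s, a <= s <= u -> u <= t <= b -> forall k l,
        measurable_fun halfline (fun xi => hi i t u s xi k l)) /\
    (\sum_(i < p) supC3 phi a b mu (hi i) (rho i) < +oo)%E.

Definition N0 (a b : R) m n (z : R -> M m n) : \bar R :=
  ereal_sup [set z' | exists s, a <= s <= b /\ z' = (`|z s|)%:E].
Definition N1 (a b mu : R) m n (z : R -> M m n) : \bar R :=
  ereal_sup [set z' | exists t s, a <= s <= b /\ a <= t <= b /\ s != t /\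
                      z' = (`|z t - z s| / `|t - s| `^ mu)%:E].
Definition N2 (a b mu : R) m n (r : R -> R -> M m n) : \bar R :=
  ereal_sup [set z' | exists t s, a <= s /\ s < t /\ t <= b /\
                      z' = (`|r t s| / (t - s) `^ mu)%:E].

Definition hypH (phi : R -> R) (T gamma : R) (n : nat)
  (x1 : R -> R -> R -> M 1 n) (x2 : R -> R -> R -> M n n)
  (x3 : R -> R -> R -> R -> M n n) : Prop :=
  [/\ intC2mu phi 0 T gamma x1,
      intC2mu phi 0 T (2 * gamma) x2,
      intC3mu phi 0 T (3 * gamma) x3,
      (forall t u s xi, 0 <= s <= u -> u <= t <= T -> 0 <= xi ->
          tdelta2 x1 t u s xi = 0) &
      (forall t u s xi, 0 <= s <= u -> u <= t <= T -> 0 <= xi ->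
          tdelta2 x2 t u s xi
          = (x1 t u xi)^T *m phint phi (x1 u s) + x3 t u s xi)].

Definition inQ (phi : R -> R) (a b kappa : R) (n k : nat)
  (x1 : R -> R -> R -> M 1 n) (ht : R -> M k 1)
  (yt : R -> R -> M k 1) (zeta : R -> M n k) (rt : R -> R -> R -> M k 1)
  : Prop :=
  [/\ tC1 phi a b yt,
      (forall xi, 0 <= xi -> yt a xi = ht xi),
      (forall t s xi, a <= s <= t -> t <= b -> 0 <= xi ->
          tdelta1 yt t s xi = (x1 t s xi *m zeta s)^T + rt t s xi),
      (N1 a b kappa zeta < +oo)%E &
      intC2mu phi a b (2 * kappa) rt].

Definition NQ (phi : R -> R) (a b kappa : R) (n k : nat)
  (yt : R -> R -> M k 1) (zeta : R -> M n k) (rt : R -> R -> R -> M k 1)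
  : \bar R :=
  (tN1 phi a b kappa yt + N0 a b zeta + N1 a b kappa zeta
   + tN2 phi a b (2 * kappa) rt)%E.

(* y in A^kappa_{f,h}(I;R^k) with decomposition (zeta^y, r^y);
   x^1_ts = int phi x1tilde_ts *)
Definition inA (phi : R -> R) (a b gamma kappa : R) (n k : nat)
  (x1 : R -> R -> R -> M 1 n) (f : R -> R -> M k 1) (h : M k 1)
  (y : R -> M k 1) (zeta : R -> M n k) (r : R -> R -> M k 1) : Prop :=
  [/\ (N2 a b 1 f < +oo)%E,
      (N1 a b gamma y < +oo)%E,
      y a = h,
      (N1 a b kappa zeta < +oo)%E /\
      (N2 a b (2 * kappa) r < +oo)%E &
      (forall t s, a <= s <= t -> t <= b ->
          y t - y s - f t s = (phint phi (x1 t s) *m zeta s)^T + r t s)].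

Definition MA (a b kappa : R) (n k : nat)
  (y : R -> M k 1) (zeta : R -> M n k) (r : R -> R -> M k 1) : \bar R :=
  (N0 a b zeta + N1 a b kappa zeta + N2 a b (2 * kappa) r
   + N1 a b kappa y)%E.

End Defs.

(* Main.v *)
Require Import Defs.
From HB Require Import structures.
From mathcomp Require Import all_boot all_order all_algebra.
From mathcomp Require Import all_classical all_reals all_analysis.
From mathcomp Require Import measurable_realfun.
From mathcomp Require Import ring lra.
Import Order.TTheory GRing.Theory Num.Theory.
Import numFieldNormedType.Exports.
Local Open Scope classical_set_scope.
Local Open Scope ring_scope.

Section S.
Variable R : realType.
Lemma mH : measurable (@halfline R).
Proof.
rewrite (_ : @halfline R = `[0%R, +oo[%classic); last first.
  by apply/seteqP; split => x /=; rewrite in_itv /= andbT.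
exact: measurable_itv.
Qed.

Lemma mphiH (phi : R -> R) : measurable_fun [set xi : R | 0 < xi] phi ->
  measurable_fun (@halfline R) phi.
Proof.
move=> mp.
rewrite (_ : @halfline R = [set 0] `|` [set xi | 0 < xi]); last first.
  apply/seteqP; split => x /=; rewrite /halfline /=.
    by rewrite le_eqVlt => /orP[/eqP->|]; [left|right].
  by case=> [->//|/ltW].
apply/measurable_funU => //.
  rewrite (_ : [set xi : R | 0 < xi] = `]0%R, +oo[%classic); first exact: measurable_itv.
  by apply/seteqP; split => x /=; rewrite in_itv /= andbT.
split => //; exact: measurable_fun_set1.
Qed.

Lemma mxnorm_entry m n (M : 'M[R]_(m, n)) i j : `|M i j| <= `|M|.
Proof.
have -> : `|M| = mx_norm M by [].
rewrite mx_normrE. exact: (le_bigmax _ (fun ij : 'I_m * 'I_n => `|M ij.1 ij.2|) (i, j)).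
Qed.
Lemma mxnorm_le m n (M : 'M[R]_(m, n)) C : 0 <= C -> (forall i j, `|M i j| <= C) -> `|M| <= C.
Proof.
move=> C0 H; have -> : `|M| = mx_norm M by [].
rewrite mx_normrE; apply: bigmax_le => // -[i j] _; exact: H.
Qed.
Lemma measurable_mxnorm m n (D : set R) (g : R -> 'M[R]_(m, n)) : measurable D ->
  (forall i j, measurable_fun D (fun x => g x i j)) -> measurable_fun D (fun x => `|g x|).
Proof.
move=> mD mg.
have -> : (fun x => `|g x|) = (fun x => \big[Num.max/0]_(ij : 'I_m * 'I_n) `|g x ij.1 ij.2|).
  by apply/funext => x; rewrite -mx_normrE.
have H : forall s, measurable_fun D (fun x => \big[Num.max/0]_(ij <- s) `|g x ij.1 ij.2|).
  elim => [|ij s IH].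
    under eq_fun do rewrite big_nil. exact: measurable_cst.
  under eq_fun do rewrite big_cons.
  apply: measurable_realfun.measurable_maxr => //; apply: measurableT_comp => //.
exact: H.
Qed.

Local Notation mu := (@lebesgue_measure R).
Local Notation H := (@halfline R).

Definition J (phi : R -> R) (v : R -> R) : \bar R :=
  (\int[mu]_(xi in H) (`|phi xi| * v xi)%:E)%E.

Section J.
Variable phi : R -> R.
Hypothesis mphi : measurable_fun H phi.

Lemma mJ (v : R -> R) : measurable_fun H v ->
  measurable_fun H (fun xi => ((`|phi xi| * v xi)%:E : \bar R)).
Proof.
move=> mv; apply/measurable_EFinP; apply: measurable_funM => //.
exact: measurableT_comp.
Qed.

Lemma J_ge0 {v : R -> R} : (forall xi, H xi -> 0 <= v xi) -> (0 <= J phi v)%E.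
Proof. by move=> v0; apply: integral_ge0 => x Hx; rewrite lee_fin mulr_ge0// v0. Qed.

Lemma J_le (v w : R -> R) : measurable_fun H v -> measurable_fun H w ->
  (forall xi, H xi -> 0 <= v xi) -> (forall xi, H xi -> v xi <= w xi) ->
  (J phi v <= J phi w)%E.
Proof.
move=> mv mw v0 vw; apply: ge0_le_integral => //.
- exact: mH.
- by move=> x Hx; rewrite lee_fin mulr_ge0// v0.
- exact: mJ.
- exact: mJ.
- by move=> x Hx; rewrite lee_fin ler_wpM2l// vw.
Qed.

Lemma J_D (v w : R -> R) : measurable_fun H v -> measurable_fun H w ->
  (forall xi, H xi -> 0 <= v xi) -> (forall xi, H xi -> 0 <= w xi) ->
  J phi (fun xi => v xi + w xi) = (J phi v + J phi w)%E.
Proof.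
move=> mv mw v0 w0; rewrite /J -ge0_integralD //.
- by apply: eq_integral => x _; rewrite mulrDr EFinD.
- exact: mH.
- by move=> x Hx; rewrite lee_fin mulr_ge0// v0.
- exact: mJ.
- by move=> x Hx; rewrite lee_fin mulr_ge0// w0.
- exact: mJ.
Qed.

Lemma J_Z (c : R) (v : R -> R) : 0 <= c -> measurable_fun H v -> (forall xi, H xi -> 0 <= v xi) ->
  J phi (fun xi => c * v xi) = (c%:E * J phi v)%E.
Proof.
move=> c0 mv v0; rewrite /J -ge0_integralZl_EFin //.
- by apply: eq_integral => x _; rewrite -EFinM mulrCA.
- exact: mH.
- by move=> x Hx; rewrite lee_fin mulr_ge0// v0.
- exact: mJ.
Qed.

Lemma J_sum p (v : 'I_p -> R -> R) : (forall l, measurable_fun H (v l)) ->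
  (forall l xi, H xi -> 0 <= v l xi) ->
  J phi (fun xi => \sum_(l < p) v l xi) = (\sum_(l < p) J phi (v l))%E.
Proof.
move=> mv v0; rewrite /J -ge0_integral_sum //.
- apply: eq_integral => x _; rewrite mulr_sumr.
  by rewrite -(big_morph _ (fun a b => EFinD a b) (erefl (0%:E))).
- exact: mH.
- move=> l; exact: mJ.
- by move=> l x Hx; rewrite lee_fin mulr_ge0// v0.
Qed.

Lemma J_bound (u v : R -> R) : measurable_fun H u -> measurable_fun H v ->
  (forall xi, H xi -> `|u xi| <= v xi) ->
  ((`|Rintegral mu H (fun xi => phi xi * u xi)|)%:E <= J phi v)%E.
Proof.
move=> mu_ mv uv.
have v0 : forall xi, H xi -> 0 <= v xi by move=> x Hx; exact: le_trans (uv x Hx).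
have mpu : measurable_fun H (fun xi => phi xi * u xi) by exact: measurable_funM.
have le1 : (\int[mu]_(xi in H) (`|phi xi * u xi|)%:E <= J phi v)%E.
  apply: ge0_le_integral => //.
  - exact: mH.
  - apply/measurable_EFinP; exact: measurableT_comp.
  - exact: mJ.
  - by move=> x Hx; rewrite lee_fin normrM ler_wpM2l// uv.
have [Jfin|Jinf] := boolP (J phi v \is a fin_num); last first.
  have : J phi v = +oo%E.
    move: Jinf; rewrite fin_numE negb_and !negbK => /orP[/eqP Jn|/eqP //].
    by move: (J_ge0 v0); rewrite Jn.
  by move=> ->; exact: leey.
have iu : mu.-integrable H (EFin \o (fun xi => phi xi * u xi)).
  apply/integrableP; split; first exact/measurable_EFinP.
  apply: le_lt_trans le1 _; by rewrite ltey_eq Jfin.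
apply: (@le_trans _ _ ((Rintegral mu H (fun xi => `|phi xi * u xi|))%:E)).
  by rewrite lee_fin; apply: le_normr_Rintegral => //; exact: mH.
rewrite /Rintegral fineK; first exact: le1.
rewrite ge0_fin_numE; last by apply: integral_ge0 => x _; rewrite lee_fin.
apply: le_lt_trans le1 _; by rewrite ltey_eq Jfin.
Qed.


Lemma J_int (u v : R -> R) : measurable_fun H u -> measurable_fun H v ->
  (forall xi, H xi -> `|u xi| <= v xi) -> (J phi v < +oo)%E ->
  mu.-integrable H (EFin \o (fun xi => phi xi * u xi)).
Proof.
move=> mu_ mv uv Jf.
have mpu : measurable_fun H (fun xi => phi xi * u xi) by exact: measurable_funM.
apply/integrableP; split; first exact/measurable_EFinP.
apply: le_lt_trans Jf.
apply: ge0_le_integral => //.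
- exact: mH.
- apply/measurable_EFinP; exact: measurableT_comp.
- exact: mJ.
- by move=> x Hx; rewrite lee_fin /= normrM ler_wpM2l// uv.
Qed.

Lemma m1w (w : R -> R) : measurable_fun H w -> measurable_fun H (fun xi => (1 + xi) * `|w xi|).
Proof.
move=> mw; apply: measurable_funM; last exact: measurableT_comp.
apply: measurable_funD => //; exact: measurable_id.
Qed.

Lemma E1 m n (g : R -> 'M[R]_(m, n)) i j :
  (forall i j, measurable_fun H (fun x => g x i j)) ->
  (J phi (fun xi => ((1 + xi) * `|g xi i j|)%R) <= L1norm phi g)%E.
Proof.
move=> mg; apply: ge0_le_integral => //.
- exact: mH.
- by move=> x Hx; rewrite lee_fin mulr_ge0// mulr_ge0// addr_ge0.
- by apply: mJ; exact: m1w.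
- apply/measurable_EFinP; apply: measurable_funM; last exact: measurable_mxnorm mH mg.
  apply: measurable_funM; first exact: measurableT_comp.
  apply: measurable_funD => //; exact: measurable_id.
- move=> x Hx; rewrite lee_fin -mulrA ler_wpM2l// ler_wpM2l ?mxnorm_entry//.
  by rewrite addr_ge0.
Qed.

Lemma inL1_int m n (g : R -> 'M[R]_(m, n)) i j : inL1 phi g ->
  mu.-integrable H (EFin \o (fun xi => phi xi * g xi i j)).
Proof.
move=> [mg Lf]; apply: (@J_int _ (fun xi => (1 + xi) * `|g xi i j|)) => //.
- exact: m1w.
- move=> x Hx; rewrite -{1}(mul1r `|_|) ler_wpM2r// lerDl; exact: Hx.
- exact: le_lt_trans (@E1 _ _ g i j mg) Lf.
Qed.

Lemma Rint_sum p (g : 'I_p -> R -> R) (c : 'I_p -> R) :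
  (forall l, mu.-integrable H (EFin \o (fun xi => phi xi * g l xi))) ->
  mu.-integrable H (EFin \o (fun xi => phi xi * \sum_(l < p) g l xi * c l)) /\
  \sum_(l < p) Rintegral mu H (fun xi => phi xi * g l xi) * c l
  = Rintegral mu H (fun xi => phi xi * \sum_(l < p) g l xi * c l).
Proof.
move=> ig; elim: p g c ig => [|p IH] g c ig.
  rewrite big_ord0; under eq_fun do rewrite big_ord0 mulr0.
  split; last by rewrite Rintegral_cst ?mul0r//; exact: mH.
  apply/integrableP; split; first exact: measurable_cst.
  by under eq_integral do rewrite /= normr0; rewrite integral0.
have [i1 e1] := IH (fun l => g (widen_ord (leqnSn p) l)) (fun l => c (widen_ord (leqnSn p) l))
   (fun l => ig _).
have ei : forall xi, phi xi * (\sum_(l < p.+1) g l xi * c l) =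
   phi xi * (\sum_(l < p) g (widen_ord (leqnSn p) l) xi * c (widen_ord (leqnSn p) l))
   + phi xi * g ord_max xi * c ord_max.
  move=> xi; rewrite big_ord_recr /= mulrDr mulrA.
  by [].
have i2 : mu.-integrable H (EFin \o (fun xi => phi xi * g ord_max xi * c ord_max)).
  have : mu.-integrable H ((EFin \o (fun xi => (phi xi * g ord_max xi)%R)) \* cst (c ord_max)%:E)%E.
    by apply: integrableZr; [exact: mH|exact: ig].
  by move=> h; apply: (eq_integrable _ _ _ _ h); [exact: mH|] => x _ /=; rewrite EFinM.
split.
  under eq_fun do rewrite ei.
  have : mu.-integrable H ((EFin \o (fun xi => (phi xi * \sum_(l < p) g (widen_ord (leqnSn p) l) xi * c (widen_ord (leqnSn p) l))%R)) \+ (EFin \o (fun xi => (phi xi * g ord_max xi * c ord_max)%R)))%E.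
    by apply: integrableD => //; exact: mH.
  by move=> h; apply: (eq_integrable _ _ _ _ h); [exact: mH|] => x _ /=; rewrite EFinD.
rewrite big_ord_recr /=.
under [in RHS]eq_Rintegral do rewrite ei.
rewrite RintegralD //; last exact: mH.
rewrite -RintegralZr //; last exact: mH.
rewrite -e1; congr (_ + _); by apply: eq_Rintegral => x _; rewrite mulrA.
Qed.


Lemma entry_bound m n (g : R -> 'M[R]_(m, n)) i j :
  (forall i j, measurable_fun H (fun x => g x i j)) ->
  ((`|phint phi g i j|)%:E <= L1norm phi g)%E.
Proof.
move=> mg; rewrite /phint mxE.
apply: le_trans (J_bound (fun xi => g xi i j) (fun xi => (1 + xi) * `|g xi i j|) (mg i j) (m1w _ (mg i j)) _) _.
  move=> x Hx; rewrite -{1}(mul1r `|_|) ler_wpM2r// lerDl; exact: Hx.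
exact: E1.
Qed.

Lemma Rint4 (g1 g2 g3 g4 : R -> R) :
  mu.-integrable H (EFin \o (fun xi => phi xi * g1 xi)) ->
  mu.-integrable H (EFin \o (fun xi => phi xi * g2 xi)) ->
  mu.-integrable H (EFin \o (fun xi => phi xi * g3 xi)) ->
  mu.-integrable H (EFin \o (fun xi => phi xi * g4 xi)) ->
  Rintegral mu H (fun xi => phi xi * g1 xi) - Rintegral mu H (fun xi => phi xi * g2 xi)
  - Rintegral mu H (fun xi => phi xi * g3 xi) - Rintegral mu H (fun xi => phi xi * g4 xi)
  = Rintegral mu H (fun xi => phi xi * (g1 xi - g2 xi - g3 xi - g4 xi)).
Proof.
move=> i1 i2 i3 i4.
have i12 : mu.-integrable H (EFin \o (fun xi => phi xi * g1 xi - phi xi * g2 xi)).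
  have : mu.-integrable H ((EFin \o (fun xi => (phi xi * g1 xi)%R)) \- (EFin \o (fun xi => (phi xi * g2 xi)%R)))%E.
    by apply: integrableB => //; exact: mH.
  by move=> hh; apply: (eq_integrable _ _ _ _ hh); [exact: mH|] => x _ /=; rewrite EFinB.
have i123 : mu.-integrable H (EFin \o (fun xi => phi xi * g1 xi - phi xi * g2 xi - phi xi * g3 xi)).
  have : mu.-integrable H ((EFin \o (fun xi => (phi xi * g1 xi - phi xi * g2 xi)%R)) \- (EFin \o (fun xi => (phi xi * g3 xi)%R)))%E.
    by apply: integrableB => //; exact: mH.
  by move=> hh; apply: (eq_integrable _ _ _ _ hh); [exact: mH|] => x _ /=; rewrite EFinB.
rewrite -RintegralB //; last exact: mH.
rewrite -RintegralB //; last exact: mH.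
rewrite -RintegralB //; last exact: mH.
by apply: eq_Rintegral => x _; rewrite !mulrBr.
Qed.

End J.

Lemma L1norm_ge0 (phi : R -> R) m n (g : R -> 'M[R]_(m, n)) : (0 <= L1norm phi g)%E.
Proof.
apply: integral_ge0 => x Hx; rewrite lee_fin mulr_ge0// mulr_ge0// addr_ge0//.
Qed.

Lemma tN2_ge0 (phi : R -> R) a b mu m n (B : R -> R -> R -> 'M[R]_(m, n)) :
  a < b -> (0 <= tN2 phi a b mu B)%E.
Proof.
move=> ab; apply: le_trans (ereal_sup_ubound _); last first.
  exists b, a; split; [exact: lexx|split; [exact: ab|split; [exact: lexx|reflexivity]]].
by rewrite mule_ge0// ?L1norm_ge0// lee_fin invr_ge0 powR_ge0.
Qed.

Lemma tN2_bound (phi : R -> R) a b mu m n (B : R -> R -> R -> 'M[R]_(m, n)) s t :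
  a <= s -> s < t -> t <= b -> (L1norm phi (B t s) < +oo)%E ->
  (tN2 phi a b mu B < +oo)%E ->
  (L1norm phi (B t s) <= (fine (tN2 phi a b mu B) * (t - s) `^ mu)%:E)%E.
Proof.
move=> as_ st tb Lf Nf.
have N0 : (0 <= tN2 phi a b mu B)%E by apply: tN2_ge0; exact: (le_lt_trans as_ (lt_le_trans st tb)).
have Nfin : tN2 phi a b mu B \is a fin_num by rewrite ge0_fin_numE.
have L0 := @L1norm_ge0 phi _ _ (B t s).
have Lfin : L1norm phi (B t s) \is a fin_num by rewrite ge0_fin_numE.
have p0 : 0 < (t - s) `^ mu by apply: powR_gt0; rewrite subr_gt0.
have : (L1norm phi (B t s) * ((t - s) `^ mu)^-1%:E <= tN2 phi a b mu B)%E.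
  apply: ereal_sup_ubound; exists t, s; split => //.
rewrite -(fineK Lfin) -(fineK Nfin) -EFinM !lee_fin.
by rewrite ler_pdivrMr.
Qed.

Lemma N1_bound a b mu m n (z : R -> 'M[R]_(m, n)) s t :
  a <= s <= b -> a <= t <= b -> s != t -> (N1 a b mu z < +oo)%E ->
  `|z t - z s| <= fine (N1 a b mu z) * `|t - s| `^ mu.
Proof.
move=> hs ht st Nf.
have p0 : 0 < `|t - s| `^ mu by apply: powR_gt0; rewrite normr_gt0 subr_eq0 eq_sym.
have e : ((`|z t - z s| / `|t - s| `^ mu)%:E <= N1 a b mu z)%E.
  by apply: ereal_sup_ubound; exists t, s.
have Nge : (0 <= N1 a b mu z)%E by apply: le_trans e; rewrite lee_fin divr_ge0// ltW.
have Nfin : N1 a b mu z \is a fin_num by rewrite ge0_fin_numE.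
by move: e; rewrite -(fineK Nfin) lee_fin ler_pdivrMr.
Qed.

Lemma N0_bound a b m n (z : R -> 'M[R]_(m, n)) s :
  a <= s <= b -> (N0 a b z < +oo)%E -> `|z s| <= fine (N0 a b z).
Proof.
move=> hs Nf.
have e : ((`|z s|)%:E <= N0 a b z)%E by apply: ereal_sup_ubound; exists s.
have Nge : (0 <= N0 a b z)%E by apply: le_trans e; rewrite lee_fin.
have Nfin : N0 a b z \is a fin_num by rewrite ge0_fin_numE.
by move: e; rewrite -(fineK Nfin) lee_fin.
Qed.

Lemma N0_ge0 a b m n (z : R -> 'M[R]_(m, n)) : a <= b -> (0 <= N0 a b z)%E.
Proof.
move=> ab; apply: le_trans (ereal_sup_ubound _); last by exists a; split; [rewrite lexx ab|].
by rewrite lee_fin.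
Qed.

Lemma N1_ge0 a b mu m n (z : R -> 'M[R]_(m, n)) : a < b -> (0 <= N1 a b mu z)%E.
Proof.
move=> ab; apply: le_trans (ereal_sup_ubound _); last first.
  exists b, a; split; first by rewrite lexx ltW.
  split; first by rewrite lexx ltW.
  by split; first by rewrite lt_eqF.
by rewrite lee_fin divr_ge0// powR_ge0.
Qed.

Lemma powR_le1D (xi th : R) : 0 <= xi -> 0 <= th <= 1 -> xi `^ th <= 1 + xi.
Proof.
move=> xi0 /andP[th0 th1].
have [x1|x1] := leP xi 1.
  apply: (@le_trans _ _ 1); last by rewrite lerDl.
  have := @ge0_ler_powR _ th th0 xi 1; rewrite powR1 => -> //.
  by rewrite nnegrE.
apply: (@le_trans _ _ xi); last by rewrite lerDr.
by apply: ler1_powR => //; exact: ltW.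
Qed.

Lemma exp_bound (x th : R) : 0 <= x -> 0 < th <= 1 -> `|expR (- x) - 1| <= x `^ th.
Proof.
move=> x0 /andP[th0 th1].
have e1 : expR (- x) <= 1 by rewrite expR_le1 oppr_le0.
rewrite ler0_norm ?subr_le0// opprB.
have hx : 1 - expR (- x) <= x.
  have := expR_ge1Dx (- x); lra.
have h1 : 1 - expR (- x) <= 1 by rewrite lerBlDr lerDl expR_ge0.
have [x1|x1] := leP x 1.
  have [->|xp] := eqVneq x 0; first by rewrite oppr0 expR0 subrr powR_ge0.
  apply: le_trans hx _; apply: ger1_powR => //.
  by rewrite lt0r xp x0.
apply: le_trans h1 _.
have := @ge0_ler_powR _ th (ltW th0) 1 x; rewrite powR1 => -> //.
- by rewrite nnegrE.
- exact: ltW.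
Qed.

Lemma exp_bound2 (xi d th : R) : 0 <= xi -> 0 <= d -> 0 < th <= 1 ->
  `|expR (- (xi * d)) - 1| <= (1 + xi) * d `^ th.
Proof.
move=> xi0 d0 /andP[th0 th1].
apply: le_trans (exp_bound (xi * d) th _ _) _; first by rewrite mulr_ge0.
  by rewrite th0 th1.
by rewrite powRM// ler_wpM2r ?powR_ge0// powR_le1D// th1 andbT ltW.
Qed.

Lemma exp_bound1 (xi d : R) : 0 <= xi -> 0 <= d ->
  `|expR (- (xi * d)) - 1| <= (1 + xi) * d.
Proof.
move=> xi0 d0; have := @exp_bound2 xi d 1 xi0 d0; rewrite powRr1// ltr01 lexx; exact.
Qed.

Lemma pow_ratio (d e p q : R) : 0 < d -> d <= e -> 0 <= p -> p <= q ->
  d `^ q <= d `^ p * e `^ (q - p).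
Proof.
move=> d0 de p0 pq.
have -> : d `^ q = d `^ p * d `^ (q - p).
  rewrite -powRD; last by apply/implyP => _; rewrite gt_eqF.
  by rewrite addrC subrK.
rewrite ler_wpM2l ?powR_ge0//; apply: ge0_ler_powR.
- by rewrite subr_ge0.
- by rewrite nnegrE ltW.
- by rewrite nnegrE (le_trans (ltW d0)).
- exact: de.
Qed.

Lemma mexp (c : R) : measurable_fun H (fun xi : R => expR (- (xi * c))).
Proof.
apply: measurableT_comp; first exact: measurable_expR.
apply: measurable_funN; apply: measurable_funM => //; exact: measurable_id.
Qed.

Lemma msum p (v : 'I_p -> R -> R) : (forall l, measurable_fun H (v l)) ->
  measurable_fun H (fun xi => \sum_(l < p) v l xi).
Proof.
elim: p v => [|p IH] v mv.
  under eq_fun do rewrite big_ord0; exact: measurable_cst.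
under eq_fun do rewrite big_ord_recr /=.
apply: measurable_funD => //; exact: IH.
Qed.

Lemma L1norm0 (phi : R -> R) m n (g : R -> 'M[R]_(m, n)) :
  (forall xi, 0 <= xi -> g xi = 0) -> L1norm phi g = 0%E.
Proof.
move=> g0; rewrite /L1norm (eq_integral (cst 0%E)); first exact: integral0.
by move=> x; rewrite inE => Hx; rewrite g0 // normr0 mulr0.
Qed.

End S.

Ltac pos := repeat first [ exact: powR_ge0 | exact: ler0n | exact: ler01 | apply: mulr_ge0 | apply: addr_ge0 | assumption ].

Theorem proposition4p12 (R : realType) (phi : R -> R) (T kappa gamma : R)
  (n : nat) (x1 : R -> R -> R -> 'M[R]_(1, n)) (x2 : R -> R -> R -> 'M[R]_(n, n))
  (x3 : R -> R -> R -> R -> 'M[R]_(n, n)) :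
  measurable_fun [set xi : R | 0 < xi] phi ->
  0 < T ->
  1 / 3 < kappa -> kappa < gamma -> gamma < 1 / 2 ->
  hypH phi T gamma x1 x2 x3 ->
  exists c : R, 0 <= c /\
  forall (k : nat) (a b : R) (a0 : 'M[R]_(k, 1)) (ht : R -> 'M[R]_(k, 1))
    (yt : R -> R -> 'M[R]_(k, 1)) (zeta : R -> 'M[R]_(n, k))
    (rt : R -> R -> R -> 'M[R]_(k, 1)),
    0 <= a -> a < b -> b <= T ->
    inL1 phi ht ->
    inQ phi a b kappa x1 ht yt zeta rt ->
    let y := fun t => a0 + phint phi (yt t) in
    let f := fun t s => phint phi (fun xi =>
               (expR (- (xi * (t - s))) - 1) * expR (- (xi * (s - a))) *: ht xi) in
    let h := a0 + phint phi ht in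
    exists (zetay : R -> 'M[R]_(n, k)) (ry : R -> R -> 'M[R]_(k, 1)),
      inA phi a b gamma kappa x1 f h y zetay ry /\
      (MA a b kappa y zetay ry
       <= c%:E * (NQ phi a b kappa yt zeta rt
                  + ((b - a) `^ (1 - kappa))%:E * L1norm phi ht))%E.
Proof.
move=> mphi0 T0 k13 kg g12 [[tC2x1 X1fin] _ _ dx1 _].
have mphi := @mphiH _ phi mphi0.
have k0 : 0 < kappa by apply: lt_trans k13; lra.
have k1 : kappa < 1 by lra.
have g0 : 0 < gamma by lra.
have k2 : 0 < 2 * kappa <= 1 by apply/andP; split; lra.
have mH' := @mH R.
set X := fine (tN2 phi 0 T gamma x1).
have X0 : 0 <= X by apply: fine_ge0; exact: tN2_ge0.
have x1tt : forall t xi, 0 <= t <= T -> 0 <= xi -> x1 t t xi = 0.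
  move=> t xi /andP[ht0 htT] xi0; have := dx1 t t t xi; rewrite ht0 htT lexx /= => /(_ isT isT xi0).
  rewrite /tdelta2 !subrr mulr0 oppr0 expR0 scale1r sub0r => /eqP; rewrite oppr_eq0 => /eqP; done.
have x1L : forall s t, 0 <= s -> s <= t -> t <= T ->
    (L1norm phi (x1 t s) <= (X * (t - s) `^ gamma)%:E)%E.
  move=> s t s0 st tT; have [->|st'] := eqVneq s t.
    rewrite L1norm0; first by rewrite lee_fin mulr_ge0// powR_ge0.
    by move=> xi xi0; apply: x1tt => //; rewrite (le_trans s0 st) tT.
  apply: tN2_bound => //; first by rewrite lt_neqAle st' st.
  by have [] := (tC2x1.1 t s); [rewrite s0 st|exact: tT|].
pose c := (1 + n%:R * X * (T `^ (gamma - kappa) + T `^ gamma)) * (1 + T `^ kappa) * (1 + T `^ (2 * kappa)).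
have W0 : 0 <= n%:R * X by pos.
have hA : 0 <= T `^ kappa by exact: powR_ge0.
have hB : 0 <= T `^ (2 * kappa) by exact: powR_ge0.
have hG : 0 <= T `^ gamma by exact: powR_ge0.
have hD : 0 <= T `^ (gamma - kappa) by exact: powR_ge0.
have hcr : (1 + T `^ kappa) * (1 + T `^ (2 * kappa)) <= c.
  have : 0 <= n%:R * X * (T `^ (gamma - kappa) + T `^ gamma) * (1 + T `^ kappa) * (1 + T `^ (2 * kappa)).
    by pos; exact: ler01.
  rewrite /c; lra.
have hcz : 1 + n%:R * X * T `^ gamma * (1 + T `^ kappa) + n%:R * X * T `^ (gamma - kappa) <= c.
  have : 0 <= T `^ kappa + n%:R * X * T `^ (gamma - kappa) * T `^ kappa
     + (1 + n%:R * X * (T `^ (gamma - kappa) + T `^ gamma)) * (1 + T `^ kappa) * T `^ (2 * kappa).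
    by pos; exact: ler01.
  rewrite /c; lra.
have c1 : 1 <= c.
  apply: le_trans hcr; have : 0 <= T `^ kappa * T `^ (2 * kappa) by pos.
  lra.
exists c; split; first exact: le_trans c1.
move=> k a b a0 ht yt zeta rt a0' ab bT hht [tC1y yta dec N1z [tC2r Rfin]] y f h.
have ab' : a <= b := ltW ab.
have aT : a <= T := le_trans ab' bT.
have e0 : 0 < b - a by rewrite subr_gt0.
have eT : b - a <= T by lra.
set Rv := fine (tN2 phi a b (2 * kappa) rt).
have Rv0 : 0 <= Rv by apply: fine_ge0; exact: tN2_ge0.
have myt : forall t, a <= t <= b -> forall i j, measurable_fun (@halfline R) (fun xi => yt t xi i j).
  by move=> t htt; have [] := tC1y.1 t htt.
have mx1 : forall t s, a <= s -> s <= t -> t <= b -> forall i j,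
    measurable_fun (@halfline R) (fun xi => x1 t s xi i j).
  move=> t s as_ st tb; have [] := tC2x1.1 t s _ _ => //.
    by rewrite (le_trans a0' as_) st.
  exact: le_trans tb bT.
have mrt : forall t s, a <= s -> s <= t -> t <= b -> forall i j,
    measurable_fun (@halfline R) (fun xi => rt t s xi i j).
  by move=> t s as_ st tb; have [] := tC2r.1 t s _ _ => //; rewrite as_ st.
have mht := hht.1.
have rttt : forall t xi, a <= t <= b -> 0 <= xi -> rt t t xi = 0.
  move=> t xi /andP[ha hb] xi0; have := dec t t xi; rewrite ha lexx hb => /(_ isT isT xi0).
  have x1t : x1 t t xi = 0 by apply: x1tt => //; rewrite (le_trans a0' ha) (le_trans hb bT).
  by rewrite /tdelta1 subrr mulr0 oppr0 expR0 scale1r subrr x1t mul0mx trmx0 add0r => <-.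
have rtL : forall s t, a <= s -> s <= t -> t <= b ->
    (L1norm phi (rt t s) <= (Rv * (t - s) `^ (2 * kappa))%:E)%E.
  move=> s t as_ st tb; have [est|st'] := eqVneq s t.
    rewrite -est L1norm0; first by rewrite lee_fin mulr_ge0// powR_ge0.
    by move=> xi xi0; apply: rttt => //; rewrite as_ est tb.
  apply: tN2_bound => //; first by rewrite lt_neqAle st' st.
  by have [] := (tC2r.1 t s); [rewrite as_ st|exact: tb|].
set Z1 := fine (N1 a b kappa zeta).
have Z10 : 0 <= Z1 by apply: fine_ge0; exact: N1_ge0.
have N0fin : (N0 a b zeta < +oo)%E.
  apply: (@le_lt_trans _ _ (`|zeta a| + Z1 * (b - a) `^ kappa)%:E); last exact: ltey.
  apply: ge_ereal_sup => z [s [hs ->]]; rewrite lee_fin.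
  have [->|sa] := eqVneq s a.
    by rewrite lerDl mulr_ge0// powR_ge0.
  have -> : zeta s = zeta a + (zeta s - zeta a) by rewrite addrC subrK.
  apply: le_trans (ler_normD _ _) _; rewrite lerD2l.
  apply: le_trans (@N1_bound _ a b kappa _ _ zeta a s _ hs _ N1z) _.
  - by rewrite lexx ab'.
  - by rewrite eq_sym.
  rewrite ler_wpM2l//; apply: ge0_ler_powR; first exact: ltW.
  - by rewrite nnegrE.
  - by rewrite nnegrE ltW.
  - case/andP: hs => h1 h2; rewrite ger0_norm; lra.
set Z0 := fine (N0 a b zeta).
have Z00 : 0 <= Z0 by apply: fine_ge0; exact: N0_ge0.
have zb : forall s, a <= s <= b -> `|zeta s| <= Z0 by move=> s hs; exact: N0_bound.
set Lh := fine (L1norm phi ht).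
have Lhe : L1norm phi ht = Lh%:E.
  by rewrite fineK// ge0_fin_numE ?L1norm_ge0//; exact: hht.2.
have Lh0 : 0 <= Lh by rewrite /Lh fine_ge0// L1norm_ge0.
have B1 : forall s t, a <= s -> s <= t -> t <= b -> forall j l,
    `|phint phi (x1 t s) j l| <= X * (t - s) `^ gamma.
  move=> s t as_ st tb j l; rewrite -lee_fin.
  apply: le_trans (@entry_bound _ phi mphi _ _ (x1 t s) j l (mx1 t s as_ st tb)) _.
  apply: x1L => //; [exact: le_trans a0' as_|exact: le_trans tb bT].
have Pb : forall s t, a <= s -> s <= t -> t <= b ->
    `|(phint phi (x1 t s) *m zeta s)^T| <= n%:R * X * (t - s) `^ gamma * Z0.
  move=> s t as_ st tb; apply: mxnorm_le.
    by apply: mulr_ge0 => //; apply: mulr_ge0; [apply: mulr_ge0|exact: powR_ge0].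
  move=> i j; rewrite !mxE.
  apply: le_trans (ler_norm_sum _ _ _) _.
  have hl : forall l : 'I_n, `|phint phi (x1 t s) j l * zeta s l i| <= X * (t - s) `^ gamma * Z0.
    move=> l; rewrite normrM; apply: ler_pM => //.
      exact: B1.
    apply: le_trans (mxnorm_entry _ _ _ _ _ _) (zb s _).
    by rewrite as_ (le_trans st tb).
  apply: le_trans (ler_sum _ (fun l _ => hl l)) _.
  by rewrite sumr_const card_ord mulr_natl !mulrnAl.
pose F := fun s t (i : 'I_k) (j : 'I_1) xi => (expR (- (xi * (t - s))) - 1) * expR (- (xi * (s - a))) * ht xi i j.
have mF : forall s t i j, measurable_fun (@halfline R) (F s t i j).
  move=> s t i j; apply: measurable_funM => //; apply: measurable_funM; last exact: mexp.
  by apply: measurable_funB => //; exact: mexp.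
have FB : forall s t, a <= s -> s <= t -> forall i j xi, 0 <= xi ->
    `|F s t i j xi| <= (t - s) * ((1 + xi) * `|ht xi i j|).
  move=> s t as_ st i j xi xi0; rewrite /F !normrM mulrA.
  have ts0 : 0 <= t - s by rewrite subr_ge0.
  apply: ler_pM => //.
  rewrite -[(t - s) * (1 + xi)]mulr1; apply: ler_pM => //.
    by rewrite [(t - s) * _]mulrC; apply: exp_bound1.
  by rewrite ger0_norm ?expR_ge0// expR_le1 oppr_le0 mulr_ge0// subr_ge0.
have FJ : forall s t, s <= t -> forall i j,
    (J R phi (fun xi => ((t - s) * ((1 + xi) * `|ht xi i j|))%R) <= ((t - s) * Lh)%:E)%E.
  move=> s t st i j.
  rewrite J_Z //; last first.
  - by move=> xi xi0; rewrite mulr_ge0// addr_ge0.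
  - exact: m1w.
  - by rewrite subr_ge0.
  rewrite EFinM lee_wpmul2l ?lee_fin ?subr_ge0// -Lhe; exact: E1.
have B2 : forall s t, a <= s -> s <= t -> t <= b -> `|f t s| <= (t - s) * Lh.
  move=> s t as_ st tb; apply: mxnorm_le; first by rewrite mulr_ge0// subr_ge0.
  move=> i j; rewrite /f /phint mxE.
  under eq_Rintegral do rewrite mxE.
  rewrite -lee_fin.
  apply: le_trans (@J_bound _ phi mphi (F s t i j) (fun xi => (t - s) * ((1 + xi) * `|ht xi i j|)) (mF s t i j) _ _) _.
  - by apply: measurable_funM => //; exact: m1w.
  - by move=> xi xi0; apply: FB.
  exact: FJ.
pose P := fun t s => (phint phi (x1 t s) *m zeta s)^T.
pose ry := fun t s => y t - y s - f t s - P t s.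
have Eu : forall s t, a <= s -> s <= t -> t <= b -> forall i j, ry t s i j =
    Rintegral (@lebesgue_measure R) (@halfline R) (fun xi => phi xi * (yt t xi i j - yt s xi i j
      - F s t i j xi - \sum_(l < n) x1 t s xi j l * zeta s l i)).
  move=> s t as_ st tb i j.
  have hs : a <= s <= b by rewrite as_ (le_trans st tb).
  have ht' : a <= t <= b by rewrite (le_trans as_ st) tb.
  have ix1 : inL1 phi (x1 t s).
    have [] := tC2x1.1 t s _ _ => //; first by rewrite (le_trans a0' as_) st.
    exact: le_trans tb bT.
  have [iS eS] := @Rint_sum _ phi _ (fun l xi => x1 t s xi j l) (fun l => zeta s l i)
    (fun l => @inL1_int _ phi mphi _ _ _ j l ix1).
  have iF : (lebesgue_measure).-integrable (@halfline R) (EFin \o (fun xi => phi xi * F s t i j xi)).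
    apply: (@J_int _ phi mphi _ (fun xi => (t - s) * ((1 + xi) * `|ht xi i j|))) => //.
    - by apply: measurable_funM => //; exact: m1w.
    - by move=> xi xi0; apply: FB.
    - by apply: le_lt_trans (FJ s t st i j) _; exact: ltey.
  have E4 := @Rint4 _ phi _ _ _ _ (@inL1_int _ phi mphi _ _ _ i j (tC1y.1 t ht')) (@inL1_int _ phi mphi _ _ _ i j (tC1y.1 s hs)) iF iS.
  rewrite /= in E4; rewrite -E4 -eS.
  rewrite /ry /P /y /f /phint !mxE.
  under eq_bigr do rewrite mxE.
  have -> : Rintegral (@lebesgue_measure R) (@halfline R) (fun xi => phi xi * ((expR (- (xi * (t - s))) - 1) * expR (- (xi * (s - a))) *: ht xi) i j)
     = Rintegral (@lebesgue_measure R) (@halfline R) (fun xi => phi xi * F s t i j xi).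
    by apply: eq_Rintegral => xi _; rewrite mxE.
  ring.
pose Cr := Rv + Z0 * n%:R * X * T `^ gamma + Rv * T `^ (2 * kappa).
have Cr0 : 0 <= Cr.
  by rewrite /Cr; pos.
have B3 : forall s t, a <= s -> s <= t -> t <= b -> `|ry t s| <= Cr * (t - s) `^ (2 * kappa).
  move=> s t as_ st tb.
  have hs : a <= s <= b by rewrite as_ (le_trans st tb).
  have ht' : a <= t <= b by rewrite (le_trans as_ st) tb.
  have ts0 : 0 <= t - s by rewrite subr_ge0.
  have d0 : 0 <= (t - s) `^ (2 * kappa) by exact: powR_ge0.
  apply: mxnorm_le; first exact: mulr_ge0.
  move=> i j; rewrite Eu // -lee_fin.
  pose v := fun xi => (1 + xi) * `|rt t s xi i j| + (t - s) `^ (2 * kappa) *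
     (Z0 * \sum_(l < n) (1 + xi) * `|x1 s a xi j l| + (1 + xi) * `|rt s a xi i j|).
  have mS : forall (g : R -> 'M[R]_(1, n)) (zz : 'M[R]_(n, k)), (forall l, measurable_fun (@halfline R) (fun xi => g xi j l)) ->
      measurable_fun (@halfline R) (fun xi => \sum_(l < n) g xi j l * zz l i).
    move=> g zz mg; apply: (@msum _ n (fun l xi => g xi j l * zz l i)) => l.
    by apply: measurable_funM => //.
  have m2 : forall l, measurable_fun (@halfline R) (fun xi => (1 + xi) * `|x1 s a xi j l|).
    by move=> l; apply: (@m1w _ (fun xi => x1 s a xi j l)); exact: (mx1 s a (lexx a) as_ (le_trans st tb)).
  have mu_ : measurable_fun (@halfline R) (fun xi => yt t xi i j - yt s xi i j
      - F s t i j xi - \sum_(l < n) x1 t s xi j l * zeta s l i).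
    apply: measurable_funB; last by apply: mS => l; exact: (mx1 t s as_ st tb).
    apply: measurable_funB; last exact: mF.
    by apply: measurable_funB; [exact: (myt t ht')|exact: (myt s hs)].
  have mv1 : measurable_fun (@halfline R) (fun xi => (1 + xi) * `|rt t s xi i j|) by apply: (@m1w _ (fun xi => rt t s xi i j)); exact: (mrt t s as_ st tb).
  have mv3 : measurable_fun (@halfline R) (fun xi => (1 + xi) * `|rt s a xi i j|) by apply: (@m1w _ (fun xi => rt s a xi i j)); exact: (mrt s a (lexx a) as_ (le_trans st tb)).
  have mv2 : measurable_fun (@halfline R) (fun xi => \sum_(l < n) (1 + xi) * `|x1 s a xi j l|).
    exact: (@msum _ n (fun l xi => (1 + xi) * `|x1 s a xi j l|)).
  have mv : measurable_fun (@halfline R) v.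
    apply: measurable_funD => //; apply: measurable_funM => //.
    apply: measurable_funD => //; apply: measurable_funM => //.
  apply: le_trans (@J_bound _ phi mphi _ v mu_ mv _) _.
    move=> xi xi0.
    have hst : a <= s <= t by rewrite as_ st.
    have has : a <= a <= s by rewrite lexx as_.
    have e1 := congr1 (fun M : 'M[R]_(k, 1) => M i j) (dec t s xi hst tb xi0).
    have e2 := congr1 (fun M : 'M[R]_(k, 1) => M i j) (dec s a xi has (le_trans st tb) xi0).
    rewrite /tdelta1 yta // !mxE in e2.
    rewrite /tdelta1 !mxE in e1.
    move/eqP: e1; rewrite subr_eq => /eqP ->.
    move/eqP: e2; rewrite subr_eq => /eqP ->.
    rewrite [Y in `|Y| <= _](_ : _ = rt t s xi i j + (expR (- (xi * (t - s))) - 1) *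
       (\sum_(l < n) x1 s a xi j l * zeta a l i + rt s a xi i j)); last by rewrite /F; ring.
    apply: le_trans (ler_normD _ _) _.
    rewrite /v normrM.
    apply: lerD.
      rewrite -{1}(mul1r `|_|) ler_wpM2r// lerDl; exact: xi0.
    have hS : `|\sum_(l < n) x1 s a xi j l * zeta a l i + rt s a xi i j| <=
        Z0 * \sum_(l < n) `|x1 s a xi j l| + `|rt s a xi i j|.
      apply: le_trans (ler_normD _ _) _; apply: lerD => //.
      apply: le_trans (ler_norm_sum _ _ _) _; rewrite mulr_sumr; apply: ler_sum => l _.
      rewrite normrM mulrC ler_wpM2r//; apply: le_trans (mxnorm_entry _ _ _ _ _ _) (zb a _).
      by rewrite lexx ab'.
    apply: le_trans (ler_pM _ _ (@exp_bound2 R xi (t - s) (2 * kappa) xi0 ts0 k2) hS) _ => //.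
    rewrite -mulr_sumr le_eqVlt; apply/orP; left; apply/eqP; ring.
  have nn1 : forall xi, (@halfline R) xi -> 0 <= (1 + xi) * `|rt t s xi i j|.
    by move=> xi xi0; rewrite mulr_ge0// addr_ge0.
  have nn3 : forall xi, (@halfline R) xi -> 0 <= (1 + xi) * `|rt s a xi i j|.
    by move=> xi xi0; rewrite mulr_ge0// addr_ge0.
  have nn2l : forall l xi, (@halfline R) xi -> 0 <= (1 + xi) * `|x1 s a xi j l|.
    by move=> l xi xi0; rewrite mulr_ge0// addr_ge0.
  have nn2 : forall xi, (@halfline R) xi -> 0 <= \sum_(l < n) (1 + xi) * `|x1 s a xi j l|.
    by move=> xi xi0; apply: sumr_ge0 => l _; exact: nn2l.
  have nn23 : forall xi, (@halfline R) xi -> 0 <= Z0 * \sum_(l < n) (1 + xi) * `|x1 s a xi j l| + (1 + xi) * `|rt s a xi i j|.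
    by move=> xi xi0; rewrite addr_ge0// ?nn3// mulr_ge0// nn2.
  have mv23 : measurable_fun (@halfline R) (fun xi => Z0 * \sum_(l < n) (1 + xi) * `|x1 s a xi j l| + (1 + xi) * `|rt s a xi i j|).
    by apply: measurable_funD => //; apply: measurable_funM.
  rewrite /v (@J_D _ phi mphi _ _ mv1 _ nn1) ; last 2 first.
  - by apply: measurable_funM.
  - by move=> xi xi0; rewrite mulr_ge0// nn23.
  rewrite (@J_Z _ phi mphi _ _ d0 mv23 nn23).
  rewrite (@J_D _ phi mphi _ _ _ mv3 _ nn3); last 2 first.
  - by apply: measurable_funM.
  - by move=> xi xi0; rewrite mulr_ge0// nn2.
  rewrite (@J_Z _ phi mphi _ _ Z00 mv2 nn2).
  rewrite (@J_sum _ phi mphi _ (fun l xi => (1 + xi) * `|x1 s a xi j l|) m2 nn2l).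
  have A1 : (J R phi (fun xi => ((1 + xi) * `|rt t s xi i j|)%R) <= (Rv * (t - s) `^ (2 * kappa))%:E)%E.
    apply: le_trans (rtL s t as_ st tb).
    by apply: E1 => //; exact: (mrt t s as_ st tb).
  have A2 : forall l, (J R phi (fun xi => ((1 + xi) * `|x1 s a xi j l|)%R) <= (X * (s - a) `^ gamma)%:E)%E.
    move=> l; apply: le_trans (x1L a s a0' as_ (le_trans (le_trans st tb) bT)).
    by apply: E1 => //; exact: (mx1 s a (lexx a) as_ (le_trans st tb)).
  have A3 : (J R phi (fun xi => ((1 + xi) * `|rt s a xi i j|)%R) <= (Rv * (s - a) `^ (2 * kappa))%:E)%E.
    apply: le_trans (rtL a s (lexx a) as_ (le_trans st tb)).
    by apply: E1 => //; exact: (mrt s a (lexx a) as_ (le_trans st tb)).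
  have A2s : (\sum_(l < n) J R phi (fun xi => ((1 + xi) * `|x1 s a xi j l|)%R) <= \sum_(l < n) (X * (s - a) `^ gamma)%:E)%E.
    by apply: lee_sum => l _; exact: A2.
  have Z0e : (0 <= Z0%:E)%E by rewrite lee_fin.
  have d0e : (0 <= ((t - s) `^ (2 * kappa))%:E)%E by rewrite lee_fin.
  apply: le_trans (leeD A1 (lee_wpmul2l d0e (leeD (lee_wpmul2l Z0e A2s) A3))) _.
  rewrite sumEFin.
  apply: (@le_trans _ _ (Rv * (t - s) `^ (2 * kappa) + (t - s) `^ (2 * kappa) *
     (Z0 * (\sum_(l < n) X * (s - a) `^ gamma) + Rv * (s - a) `^ (2 * kappa)))%:E).
    by rewrite !EFinD !EFinM.
  rewrite lee_fin sumr_const card_ord -[X * _ *+ n]mulr_natl.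
  have p1 : (s - a) `^ gamma <= T `^ gamma.
    apply: ge0_ler_powR; [exact: ltW|by rewrite nnegrE subr_ge0|by rewrite nnegrE ltW|lra].
  have p2 : (s - a) `^ (2 * kappa) <= T `^ (2 * kappa).
    apply: ge0_ler_powR; [by case/andP: k2 => /ltW|by rewrite nnegrE subr_ge0|by rewrite nnegrE ltW|lra].
  rewrite [Cr * _](_ : _ = Rv * (t - s) `^ (2 * kappa) + (t - s) `^ (2 * kappa) *
     (Z0 * (n%:R * (X * T `^ gamma)) + Rv * T `^ (2 * kappa))); last by rewrite /Cr; ring.
  rewrite lerD2l; apply: ler_wpM2l => //; apply: lerD; last exact: ler_wpM2l.
  apply: ler_wpM2l => //; apply: ler_wpM2l => //; exact: ler_wpM2l.
have decry : forall t s, y t - y s - f t s = P t s + ry t s.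
  move=> t s; rewrite /ry; move: (y t) (y s) (f t s) (P t s) => A B C D.
  by apply/matrixP => i j; rewrite !mxE; ring.
have B4 : forall s t, a <= s -> s <= t -> t <= b ->
    `|y t - y s| <= (t - s) * Lh + n%:R * X * (t - s) `^ gamma * Z0 + Cr * (t - s) `^ (2 * kappa).
  move=> s t as_ st tb.
  have -> : y t - y s = f t s + P t s + ry t s.
    by rewrite /ry; move: (y t) (y s) (f t s) (P t s) => A B C D; apply/matrixP => i j; rewrite !mxE; ring.
  apply: le_trans (ler_normD _ _) _; apply: lerD; last exact: B3.
  apply: le_trans (ler_normD _ _) _; apply: lerD; [exact: B2|exact: Pb].
have Kp : forall p, 0 <= p -> p <= gamma -> forall s t, a <= s -> s < t -> t <= b ->
    `|y t - y s| <= (t - s) `^ p * (Lh * (b - a) `^ (1 - p) + n%:R * X * Z0 * (b - a) `^ (gamma - p)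
        + Cr * (b - a) `^ (2 * kappa - p)).
  move=> p p0 pg s t as_ st tb.
  have d0 : 0 < t - s by rewrite subr_gt0.
  have de : t - s <= b - a by lra.
  apply: le_trans (B4 s t as_ (ltW st) tb) _.
  have q1 : (t - s) `^ 1 <= (t - s) `^ p * (b - a) `^ (1 - p) by apply: pow_ratio => //; lra.
  have q2 : (t - s) `^ gamma <= (t - s) `^ p * (b - a) `^ (gamma - p) by apply: pow_ratio => //; lra.
  have q3 : (t - s) `^ (2 * kappa) <= (t - s) `^ p * (b - a) `^ (2 * kappa - p) by apply: pow_ratio => //; lra.
  rewrite powRr1 in q1; last exact: ltW.
  have hX : 0 <= n%:R * X * Z0 by pos.
  have := ler_wpM2l Lh0 q1; have := ler_wpM2l hX q2; have := ler_wpM2l Cr0 q3.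
  set P1 := (t - s) `^ p; set E1 := (b - a) `^ (1 - p); set E2 := (b - a) `^ (gamma - p);
  set E3 := (b - a) `^ (2 * kappa - p); set G1 := (t - s) `^ gamma; set G2 := (t - s) `^ (2 * kappa).
  move=> h3 h2 h1; lra.
pose K := fun p => Lh * (b - a) `^ (1 - p) + n%:R * X * Z0 * (b - a) `^ (gamma - p)
        + Cr * (b - a) `^ (2 * kappa - p).
have N1y : forall p, 0 < p -> p <= gamma -> (N1 a b p y <= (K p)%:E)%E.
  move=> p p0 pg; apply: ge_ereal_sup => z [t [s [hs [ht' [st ->]]]]]; rewrite lee_fin.
  have pp : 0 < `|t - s| `^ p by apply: powR_gt0; rewrite normr_gt0 subr_eq0 eq_sym.
  rewrite ler_pdivrMr // mulrC.
  case/andP: hs => as_ sb; case/andP: ht' => at_ tb.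
  have [lst|lts|est] := ltgtP s t.
  - rewrite gtr0_norm ?subr_gt0 //; exact: Kp (ltW p0) pg s t as_ lst tb.
  - rewrite distrC [`|t - s|]distrC gtr0_norm ?subr_gt0 //; exact: Kp (ltW p0) pg t s at_ lts sb.
  - by rewrite est eqxx in st.
have N2ry : (N2 a b (2 * kappa) ry <= Cr%:E)%E.
  apply: ge_ereal_sup => z [t [s [as_ [st [tb ->]]]]]; rewrite lee_fin.
  have pp : 0 < (t - s) `^ (2 * kappa) by apply: powR_gt0; rewrite subr_gt0.
  rewrite ler_pdivrMr //; exact: B3 s t as_ (ltW st) tb.
have N2f : (N2 a b 1 f <= Lh%:E)%E.
  apply: ge_ereal_sup => z [t [s [as_ [st [tb ->]]]]]; rewrite lee_fin.
  have pp : 0 < t - s by rewrite subr_gt0.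
  rewrite powRr1 ?(ltW pp) // ler_pdivrMr // mulrC; exact: B2 s t as_ (ltW st) tb.
exists zeta, ry; split.
  split.
  - by apply: le_lt_trans N2f _; exact: ltey.
  - by apply: le_lt_trans (N1y gamma g0 (lexx _)) _; exact: ltey.
  - rewrite /y /h; congr (_ + _); apply/matrixP => i j; rewrite /phint !mxE.
    by apply: eq_Rintegral => xi; rewrite inE => xi0; rewrite yta.
  - split => //; by apply: le_lt_trans N2ry _; exact: ltey.
  - by move=> t s _ _; exact: decry.
have N0e : N0 a b zeta = Z0%:E by rewrite fineK // ge0_fin_numE // N0_ge0.
have N1e : N1 a b kappa zeta = Z1%:E by rewrite fineK // ge0_fin_numE // N1_ge0.
have tNe : tN2 phi a b (2 * kappa) rt = Rv%:E by rewrite fineK // ge0_fin_numE // tN2_ge0.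
have tN1ge : (0 <= tN1 phi a b kappa yt)%E by exact: tN2_ge0.
rewrite /MA /NQ N0e N1e tNe Lhe.
apply: le_trans (leeD (leeD (lexx _) N2ry) (N1y kappa k0 (ltW kg))) _.
apply: (@le_trans _ _ (c%:E * (Z0 + Z1 + Rv + (b - a) `^ (1 - kappa) * Lh)%R%:E)%E).
  rewrite -EFinM -!EFinD lee_fin.
  have e2 : 2 * kappa - kappa = kappa by ring.
  rewrite /K e2.
  have eA : (b - a) `^ kappa <= T `^ kappa.
    by apply: ge0_ler_powR; [exact: ltW|rewrite nnegrE ltW|rewrite nnegrE ltW|].
  have eD : (b - a) `^ (gamma - kappa) <= T `^ (gamma - kappa).
    by apply: ge0_ler_powR; [rewrite subr_ge0 ltW|rewrite nnegrE ltW|rewrite nnegrE ltW|].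
  have Ep : 0 <= (b - a) `^ (1 - kappa) * Lh by pos.
  have hXZ : 0 <= n%:R * X * Z0 by pos.
  have h1 := ler_wpM2l Cr0 eA.
  have h2 := ler_wpM2l hXZ eD.
  have h3 := ler_wpM2r Z00 hcz.
  have h4 := ler_wpM2r Rv0 hcr.
  have h5 := ler_wpM2r Z10 c1.
  have h6 := ler_wpM2r Ep c1.
  move: h1 h2 h3 h4 h5 h6; rewrite /Cr /c => h1 h2 h3 h4 h5 h6.
  lra.
apply: lee_wpmul2l; first by rewrite lee_fin; exact: le_trans c1.
rewrite !EFinD EFinM; apply: leeD => //; apply: leeD => //; apply: leeD => //.
exact: leeDr.
Qed.
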